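(* Assume $r(\boldsymbol\gamma)\le 1<2+\alpha\le R(\boldsymbol\gamma)$. Let $(\mathbf A^\ddagger,\mathbf q^\ddagger)$ maximize $\Pi$ over $\mathcal A\times\mathbb R^n_{\ge0}$, and let $(\mathbf A^{\rm d},\mathbf q^{\rm d})$ be an equilibrium with $\mathbf A^{\rm d}\mathbf q^{\rm d}=\boldsymbol\beta$ and $\mathbf q^{\rm d}=\boldsymbol\gamma/(2+\alpha)$. Then $\Omega(\mathbf A^{\rm d},\mathbf q^{\rm d})<\Omega(\mathbf A^\ddagger,\mathbf q^\ddagger)$ if and only if $\|\boldsymbol\gamma\|_2>\dfrac{2+\alpha}{\sqrt{4+3\alpha}}$.
   Context: Model: integers $n\ge2$, $m\ge2$; $\alpha>0$, $\boldsymbol\beta\in\mathbb R^m$ with $\|\boldsymbol\beta\|_2=1$, $\boldsymbol\gamma\in\mathbb R^n$ with all $\gamma_i>0$. $\mathcal A$ is the set of real $m\times n$ matrices $\mathbf A=[\mathbf a_1,\dots,\mathbf a_n]$ with all $\|\mathbf a_i\|_2=1$. With $\mathbf x=\mathbf A\mathbf q$: total surplus $\Omega(\mathbf A,\mathbf q)=\alpha(\mathbf x^\top\boldsymbol\beta-\tfrac12\mathbf x^\top\mathbf x)+\mathbf q^\top\boldsymbol\gamma-\tfrac12\mathbf q^\top\mathbf q$; aggregate profit $\Pi(\mathbf A,\mathbf q)=\alpha(\mathbf x^\top\boldsymbol\beta-\mathbf x^\top\mathbf x)+\mathbf q^\top\boldsymbol\gamma-\mathbf q^\top\mathbf q$.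 Oligopoly: firm $i$ chooses unit $\mathbf a_i$ and $q_i\ge0$ to maximize $\Pi_i=\alpha q_i\mathbf a_i^\top(\boldsymbol\beta-\sum_{j\ne i}q_j\mathbf a_j)-(1+\alpha)q_i^2+\gamma_iq_i$ given others; an equilibrium is a profile of mutual best responses. $R(\mathbf v)=\|\mathbf v\|_1$, $r(\mathbf v)=2\|\mathbf v\|_\infty-\|\mathbf v\|_1$. *)

(* Defs.v *)
From HB Require Import structures.
From mathcomp Require Import all_boot all_order all_algebra.
From mathcomp Require Import reals.
Set Implicit Arguments. Unset Strict Implicit. Unset Printing Implicit Defensive.
Import Order.TTheory GRing.Theory Num.Theory.
Local Open Scope ring_scope.

Section Model.
Variable R : realType.

Definition dotv {k : nat} (u v : 'cV[R]_k) : R := \sum_(i < k) u i 0 * v i 0.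

Definition norm2 {k : nat} (v : 'cV[R]_k) : R := Num.sqrt (dotv v v).
Definition norm1 {k : nat} (v : 'cV[R]_k) : R := \sum_(i < k) `|v i 0|.
Definition normInf {k : nat} (v : 'cV[R]_k) : R := \big[Num.max/0]_(i < k) `|v i 0|.

Definition Rfun {k : nat} (v : 'cV[R]_k) : R := norm1 v.
Definition rfun {k : nat} (v : 'cV[R]_k) : R := 2 * normInf v - norm1 v.

Definition unit_cols {m n : nat} (A : 'M[R]_(m, n)) : Prop :=
  forall i : 'I_n, dotv (col i A) (col i A) = 1.

Definition nonneg_vec {n : nat} (q : 'cV[R]_n) : Prop := forall i : 'I_n, 0 <= q i 0.

Definition Omega {m n : nat} (alpha : R) (beta : 'cV[R]_m) (gamma : 'cV[R]_n)
  (A : 'M[R]_(m, n)) (q : 'cV[R]_n) : R :=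
  let x := A *m q in
  alpha * (dotv x beta - 2^-1 * dotv x x) + dotv q gamma - 2^-1 * dotv q q.

Definition Pi {m n : nat} (alpha : R) (beta : 'cV[R]_m) (gamma : 'cV[R]_n)
  (A : 'M[R]_(m, n)) (q : 'cV[R]_n) : R :=
  let x := A *m q in
  alpha * (dotv x beta - dotv x x) + dotv q gamma - dotv q q.

Definition firm_profit {m n : nat} (alpha : R) (beta : 'cV[R]_m) (gamma : 'cV[R]_n)
  (A : 'M[R]_(m, n)) (q : 'cV[R]_n) (i : 'I_n) (a : 'cV[R]_m) (t : R) : R :=
  alpha * t * dotv a (beta - \sum_(j < n | j != i) q j 0 *: col j A)
  - (1 + alpha) * t ^+ 2 + gamma i 0 * t.

Definition equilibrium {m n : nat} (alpha : R) (beta : 'cV[R]_m) (gamma : 'cV[R]_n)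
  (A : 'M[R]_(m, n)) (q : 'cV[R]_n) : Prop :=
  unit_cols A /\ nonneg_vec q /\
  forall (i : 'I_n) (a : 'cV[R]_m) (t : R),
    dotv a a = 1 -> 0 <= t ->
    firm_profit alpha beta gamma A q i a t <= firm_profit alpha beta gamma A q i (col i A) (q i 0).

Definition Pi_maximizer {m n : nat} (alpha : R) (beta : 'cV[R]_m) (gamma : 'cV[R]_n)
  (A : 'M[R]_(m, n)) (q : 'cV[R]_n) : Prop :=
  unit_cols A /\ nonneg_vec q /\
  forall (A' : 'M[R]_(m, n)) (q' : 'cV[R]_n), unit_cols A' -> nonneg_vec q' ->
    Pi alpha beta gamma A' q' <= Pi alpha beta gamma A q.

End Model.

(* Main.v *)
Require Import Defs.
From HB Require Import structures.
From mathcomp Require Import all_boot all_order all_algebra.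
From mathcomp Require Import reals ring lra.
Import Order.TTheory GRing.Theory Num.Theory.
Local Open Scope ring_scope.

Section D.
Context {R : realType} {k : nat}.
Implicit Types u v w : 'cV[R]_k.

Lemma dotvC u v : dotv u v = dotv v u.
Proof. by apply: eq_bigr => i _; rewrite mulrC. Qed.
Lemma dotvDl u v w : dotv (u + v) w = dotv u w + dotv v w.
Proof. by rewrite /dotv -big_split; apply: eq_bigr => i _; rewrite !mxE mulrDl. Qed.
Lemma dotvZl a u w : dotv (a *: u) w = a * dotv u w.
Proof. by rewrite /dotv mulr_sumr; apply: eq_bigr => i _; rewrite !mxE mulrA. Qed.
Lemma dotvNl u w : dotv (- u) w = - dotv u w.
Proof. by rewrite -scaleN1r dotvZl mulN1r. Qed.
Lemma dotvBl u v w : dotv (u - v) w = dotv u w - dotv v w.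
Proof. by rewrite dotvDl dotvNl. Qed.
Lemma dotvDr u v w : dotv w (u + v) = dotv w u + dotv w v.
Proof. by rewrite dotvC dotvDl !(dotvC w). Qed.
Lemma dotvBr u v w : dotv w (u - v) = dotv w u - dotv w v.
Proof. by rewrite dotvC dotvBl !(dotvC w). Qed.
Lemma dotvZr a u w : dotv w (a *: u) = a * dotv w u.
Proof. by rewrite dotvC dotvZl dotvC. Qed.
Lemma dotv0l w : dotv 0 w = 0.
Proof. by rewrite -(scale0r 0) dotvZl mul0r. Qed.
Lemma dotv_ge0 u : 0 <= dotv u u.
Proof. by apply: sumr_ge0 => i _; rewrite -expr2 sqr_ge0. Qed.
Lemma dotv_eq0 u : dotv u u = 0 -> u = 0.
Proof.
move=> h; apply/matrixP => i j; rewrite (ord1 j) mxE.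
have hs : \sum_(i < k) u i 0 ^+ 2 = 0.
  by rewrite -[RHS]h /dotv; apply: eq_bigr => ? _; rewrite expr2.
have := @psumr_eq0P _ _ xpredT (fun i => u i 0 ^+ 2) (fun i _ => sqr_ge0 (u i 0)) hs i isT.
by move/eqP; rewrite sqrf_eq0 => /eqP.
Qed.
Lemma dotv_mx u v : dotv u v = (u^T *m v) 0 0.
Proof. by rewrite mxE; apply: eq_bigr => i _; rewrite mxE. Qed.
End D.

Section HH.
Context {R : realType} {k : nat}.
Implicit Types u v w : 'cV[R]_k.

Definition HM w : 'M[R]_k := 1%:M - (2 / dotv w w) *: (w *m w^T).

Lemma HMv w v : HM w *m v = v - (2 / dotv w w * dotv w v) *: w.
Proof.
rewrite /HM mulmxBl mul1mx -scalemxAl -mulmxA.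
congr (_ - _); rewrite -scalerA; congr (_ *: _).
apply/matrixP => i j; rewrite (ord1 j) !mxE big_ord1 mulrC; congr (_ * _).
by rewrite dotv_mx.
Qed.

Lemma HM_norm w v : dotv (HM w *m v) (HM w *m v) = dotv v v.
Proof.
rewrite HMv !(dotvBl, dotvBr, dotvZl, dotvZr) (dotvC w v).
have [e|ne] := eqVneq (dotv w w) 0.
  by rewrite e invr0 !mulr0 !mul0r !subr0.
by field.
Qed.

Lemma HM_map x b : dotv x x = 1 -> dotv b b = 1 -> HM (x - b) *m x = b.
Proof.
move=> hx hb; rewrite HMv.
have [e|ne] := eqVneq (dotv (x - b) (x - b)) 0.
  have := dotv_eq0 _ e => /eqP; rewrite subr_eq0 => /eqP ->.
  by rewrite subrr scaler0 subr0.
have ww : dotv (x - b) (x - b) = 2 - 2 * dotv x b.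
  by rewrite !(dotvBl, dotvBr) hx hb (dotvC b x); ring.
have wx : dotv (x - b) x = 1 - dotv x b by rewrite dotvBl hx dotvC.
have -> : 2 / dotv (x - b) (x - b) * dotv (x - b) x = 1.
  rewrite wx; rewrite ww in ne *; field.
  by apply: contra ne => /eqP e; apply/eqP; rewrite -e; ring.
by rewrite scale1r opprB addrC subrK.
Qed.
End HH.

Section P.
Variable R : realType.

Lemma maxH (x y : R) : x <= Num.max x y /\ y <= Num.max x y /\
  (Num.max x y = x \/ Num.max x y = y).
Proof.
rewrite /Order.max; case: (ltP x y) => h.
- by split; [exact: ltW h|split; [|right]].
- by split; [|split; [exact: h|left]].
Qed.

Lemma max_le_sum n (l : nat -> R) : (forall i, 0 < l i) ->
  \big[Num.max/0]_(i < n) l i <= \sum_(i < n) l i.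
Proof.
elim: n l => [|n IH] l lp; first by rewrite !big_ord0.
rewrite big_ord_recl [in X in _ <= X]big_ord_recl /=.
have := IH (fun k => l k.+1) (fun i => lp i.+1).
have : 0 <= \sum_(i < n) l (lift ord0 i) by apply: sumr_ge0 => i _; exact: ltW.
have := lp 0%N.
have [a [b [c|c]]] := maxH (l 0%N) (\big[Num.max/0]_(i < n) l (lift ord0 i));
  rewrite c => h1 h2 h3; lra.
Qed.

Lemma planar n (l : nat -> R) : (forall i, 0 < l i) -> forall L, 0 <= L ->
  2 * \big[Num.max/0]_(i < n) l i - \sum_(i < n) l i <= L ->
  L <= \sum_(i < n) l i ->
  exists v : nat -> R * R, (forall i, (v i).1 ^+ 2 + (v i).2 ^+ 2 = 1) /\
    (\sum_(i < n) l i * (v i).1) ^+ 2 + (\sum_(i < n) l i * (v i).2) ^+ 2 = L ^+ 2.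
Proof.
elim: n l => [|n IH] l lp L L0 h1 h2.
  exists (fun _ => (1, 0)); split => [i|] /=; first by rewrite expr1n expr0n addr0.
  rewrite !big_ord0 in h1 h2 *. have -> : L = 0 by lra. by rewrite expr0n addr0.
rewrite !big_ord_recl /= in h1 h2 *.
set M := \big[Num.max/0]_(i < n) l (lift ord0 i) in h1.
set S := \sum_(i < n) l (lift ord0 i) in h1 h2.
have MS : M <= S.
  exact: (max_le_sum n (fun k => l k.+1) (fun i => lp i.+1)).
have S0 : 0 <= S by apply: sumr_ge0 => i _; exact: ltW.
have l0 := lp 0%N. set l1 := l 0%N in l0 h1 h2 *.
have [m1 [m2 _]] := maxH l1 M.
have hA : 2 * M - S - l1 <= L by lra.
have hB : l1 - S <= L by lra.
have [x [x1 [x4 [x5 x6]]]] : exists x, 0 <= x /\ 2 * M - S <= x /\ `|L - l1| <= x /\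
    (x = 0 \/ x = 2 * M - S \/ x = `|L - l1|).
  have [y1 [y2 y3]] := maxH 0 (Num.max (2 * M - S) `|L - l1|).
  have [y4 [y5 y6]] := maxH (2 * M - S) `|L - l1|.
  exists (Num.max 0 (Num.max (2 * M - S) `|L - l1|)).
  split; first exact: y1. split; first exact: (le_trans y4 y2).
  split; first exact: (le_trans y5 y2).
  case: y3 => ->; [by left|right]. case: y6 => ->; [by left|by right].
have nL : `|L - l1| <= S /\ L - l1 <= `|L - l1| /\ l1 - L <= `|L - l1|.
  split; last by split; [exact: ler_norm| rewrite -normrN opprB; exact: ler_norm].
  by rewrite ler_norml; apply/andP; split; lra.
have nL2 : `|L - l1| <= L + l1 by rewrite ler_norml; apply/andP; split; lra.
have xS : x <= S by case: x6 => [->|[->|->]]; lra.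
have xL : x <= L + l1 by case: x6 => [->|[->|->]]; lra.
have Lx : L <= x + l1 by lra.
have Lx2 : l1 - x <= L by lra.
have x0 : 0 <= x by exact: x1.
have h3 : 2 * \big[Num.max/0]_(i < n) l i.+1 - \sum_(i < n) l i.+1 <= x by exact: x4.
have xS' : x <= \sum_(i < n) l i.+1 by exact: xS.
have [v [vu vs]] := IH (fun k => l k.+1) (fun i => lp i.+1) x x0 h3 xS'.
set X := \sum_(i < n) l i.+1 * (v i).1 in vs.
set Y := \sum_(i < n) l i.+1 * (v i).2 in vs.
suff [u [uu uP]] : exists u : R * R, u.1 ^+ 2 + u.2 ^+ 2 = 1 /\
   (l1 * u.1 + X) ^+ 2 + (l1 * u.2 + Y) ^+ 2 = L ^+ 2.
  exists (fun k => if k is k'.+1 then v k' else u); split => [[|i]|] //=.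
  rewrite !big_ord_recl /= -uP.
  by congr (_ ^+ 2 + _ ^+ 2); congr (_ + _); apply: eq_bigr => i _; rewrite lift0.
have [xz|xp] := eqVneq x 0.
  have XY : X = 0 /\ Y = 0.
    have e0 : X ^+ 2 + Y ^+ 2 = 0 by rewrite vs xz; ring.
    have := sqr_ge0 X; have := sqr_ge0 Y => hy hx.
    have ex : X ^+ 2 = 0 by lra. have ey : Y ^+ 2 = 0 by lra.
    by move/eqP: ex; move/eqP: ey; rewrite !sqrf_eq0 => /eqP -> /eqP ->.
  have Ll : L = l1 by lra.
  exists (@pair R R 1 0); split => /=; first by rewrite expr1n expr0n addr0.
  by case: XY => -> ->; rewrite Ll; ring.
have xpos : 0 < x by rewrite lt_def xp x0.
set c := (L ^+ 2 - x ^+ 2 - l1 ^+ 2) / (2 * x * l1).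
have c2 : c ^+ 2 <= 1.
  have hc : - 1 <= c <= 1.
    rewrite /c ler_pdivlMr ?ler_pdivrMr; try nra.
  case/andP: hc => ? ?; nra.
set s := Num.sqrt (1 - c ^+ 2).
have s2 : s ^+ 2 = 1 - c ^+ 2 by rewrite sqr_sqrtr // subr_ge0.
exists ((X * c - Y * s) / x, (Y * c + X * s) / x) => /=.
have e1 : ((X * c - Y * s) / x) ^+ 2 + ((Y * c + X * s) / x) ^+ 2 = 1.
  have -> : ((X * c - Y * s) / x) ^+ 2 + ((Y * c + X * s) / x) ^+ 2 =
     (X ^+ 2 + Y ^+ 2) * (c ^+ 2 + s ^+ 2) / x ^+ 2.
    by field; rewrite xp.
  rewrite vs s2 addrC subrK mulr1 divff //. by rewrite expf_neq0.
split => //.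
have -> : (l1 * ((X * c - Y * s) / x) + X) ^+ 2 + (l1 * ((Y * c + X * s) / x) + Y) ^+ 2
  = (X ^+ 2 + Y ^+ 2) + 2 * l1 * (X * (X * c - Y * s) + Y * (Y * c + X * s)) / x
    + l1 ^+ 2 * (((X * c - Y * s) / x) ^+ 2 + ((Y * c + X * s) / x) ^+ 2).
  by field; rewrite xp.
rewrite e1 vs.
have -> : X * (X * c - Y * s) + Y * (Y * c + X * s) = (X ^+ 2 + Y ^+ 2) * c by ring.
rewrite vs /c. field. by rewrite xp (gt_eqF l0).
Qed.
End P.

Lemma construct (R : realType) (m n : nat) (beta : 'cV[R]_m) (gamma : 'cV[R]_n) :
  (2 <= m)%N -> dotv beta beta = 1 -> (forall i, 0 < gamma i 0) ->
  2 * normInf gamma - norm1 gamma <= 1 -> 1 <= norm1 gamma ->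
  exists A : 'M[R]_(m, n), unit_cols A /\ A *m gamma = beta.
Proof.
move=> m2 hb gp hr hR.
pose l k := if insub k is Some i then gamma i 0 else 1.
have lE : forall i : 'I_n, l i = gamma i 0 by move=> i; rewrite /l valK.
have lp : forall k, 0 < l k by move=> k; rewrite /l; case: insub => // ?; exact: gp.
have eM : \big[Num.max/0]_(i < n) l i = normInf gamma.
  by apply: eq_bigr => i _; rewrite lE gtr0_norm.
have eS : \sum_(i < n) l i = norm1 gamma.
  by apply: eq_bigr => i _; rewrite lE gtr0_norm.
have [v [vu vs]] := @planar R n l lp 1 ler01 (ltac:(rewrite eM eS; exact: hr)) (ltac:(rewrite eS; exact: hR)).
set X := \sum_(i < n) gamma i 0 * (v i).1.
set Y := \sum_(i < n) gamma i 0 * (v i).2.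
have XY : X ^+ 2 + Y ^+ 2 = 1.
  rewrite -[RHS](expr1n _ 2) -vs /X /Y.
  by congr (_ ^+ 2 + _ ^+ 2); apply: eq_bigr => i _; rewrite lE.
have m0 : (0 < m)%N by apply: leq_trans m2.
pose e0 : 'I_m := Ordinal m0.
pose e1 : 'I_m := Ordinal m2.
pose d0 : 'cV[R]_m := \col_k ((k == e0)%:R).
pose d1 : 'cV[R]_m := \col_k ((k == e1)%:R).
have dd : forall (a b : 'I_m), dotv (\col_k ((k == a)%:R) : 'cV[R]_m) (\col_k ((k == b)%:R)) = ((a == b)%:R).
  move=> a b; rewrite /dotv (bigD1 a) //= big1 ?addr0; last first.
    by move=> i /negPf ia; rewrite !mxE ia mul0r.
  by rewrite !mxE eqxx mul1r.
have d00 : dotv d0 d0 = 1 by rewrite dd eqxx.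
have d11 : dotv d1 d1 = 1 by rewrite dd eqxx.
have d01 : dotv d0 d1 = 0 by rewrite dd.
pose A0 : 'M[R]_(m, n) := \matrix_(k, i) ((v i).1 * d0 k 0 + (v i).2 * d1 k 0).
have cA0 : forall i, col i A0 = (v i).1 *: d0 + (v i).2 *: d1.
  by move=> i; apply/matrixP => a b; rewrite !mxE.
have A0g : A0 *m gamma = X *: d0 + Y *: d1.
  apply/matrixP => a b; rewrite (ord1 b) !mxE /X /Y !mulr_suml -big_split.
  by apply: eq_bigr => i _; rewrite !mxE /=; ring.
set x := A0 *m gamma.
have xx : dotv x x = 1.
  rewrite /x A0g !(dotvDl, dotvDr, dotvZl, dotvZr) d00 d11 d01 (dotvC d1 d0) d01 -[RHS]XY; ring.
exists (HM (x - beta) *m A0); split.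
  move=> i; rewrite colE -mulmxA -colE HM_norm cA0.
  rewrite !(dotvDl, dotvDr, dotvZl, dotvZr) d00 d11 d01 (dotvC d1 d0) d01 -[RHS](vu i); ring.
by rewrite -mulmxA HM_map.
Qed.

Lemma Pi_id (R : realType) (m n : nat) (alpha : R) (beta : 'cV[R]_m) (gamma : 'cV[R]_n)
  (A : 'M[R]_(m, n)) (q : 'cV[R]_n) : dotv beta beta = 1 ->
  Pi alpha beta gamma A q = alpha / 4 + dotv gamma gamma / 4
    - alpha * dotv (A *m q - 2^-1 *: beta) (A *m q - 2^-1 *: beta)
    - dotv (q - 2^-1 *: gamma) (q - 2^-1 *: gamma).
Proof.
move=> hb; rewrite /Pi !(dotvBl, dotvBr, dotvZl, dotvZr) hb (dotvC beta) (dotvC gamma q).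
by field.
Qed.

Theorem theorem2 (R : realType) (m n : nat) (alpha : R)
  (beta : 'cV[R]_m) (gamma : 'cV[R]_n)
  (Ad Add : 'M[R]_(m, n)) (qd qdd : 'cV[R]_n) :
  (2 <= n)%N -> (2 <= m)%N -> 0 < alpha -> norm2 beta = 1 ->
  (forall i : 'I_n, 0 < gamma i 0) ->
  rfun gamma <= 1 -> 1 < 2 + alpha -> 2 + alpha <= Rfun gamma ->
  Pi_maximizer alpha beta gamma Add qdd ->
  equilibrium alpha beta gamma Ad qd ->
  Ad *m qd = beta -> qd = (2 + alpha)^-1 *: gamma ->
  (Omega alpha beta gamma Ad qd < Omega alpha beta gamma Add qdd <->
   (2 + alpha) / Num.sqrt (4 + 3 * alpha) < norm2 gamma).
Proof.
move=> n2 m2 a0 nb gp hr _ hR [uA [nq hmax]] _ hAd hqd.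
have hb : dotv beta beta = 1.
  by rewrite -(sqr_sqrtr (dotv_ge0 beta)); move: nb; rewrite /norm2 => ->; rewrite expr1n.
have [A' [uA' A'g]] := @construct R m n beta gamma m2 hb gp hr (ltac:(move: hR; rewrite /Rfun; lra)).
set q' := 2^-1 *: gamma.
have nq' : nonneg_vec q' by move=> i; rewrite /q' mxE; apply: mulr_ge0; [by rewrite invr_ge0|exact: ltW (gp i)].
have := hmax A' q' uA' nq'.
rewrite !Pi_id // /q' -scalemxAr A'g !subrr !dotv0l mulr0 !subr0.
set dx := dotv (Add *m qdd - _) _. set dq := dotv (qdd - _) _.
have dx0 : 0 <= dx := dotv_ge0 _.
have dq0 : 0 <= dq := dotv_ge0 _.
move=> hle.
have ex : dx = 0 by nra.
have eq : dq = 0 by nra.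
have /subr0_eq hx := dotv_eq0 _ ex.
have /subr0_eq hq := dotv_eq0 _ eq.
rewrite /Omega hx hq hAd hqd !(dotvZl, dotvZr) hb.
set G := dotv gamma gamma.
have G0 : 0 < G.
  rewrite lt_def dotv_ge0 andbT; apply/eqP => /(dotv_eq0 _) g0.
  have n0 : (0 < n)%N by apply: leq_trans n2.
  by have := gp (Ordinal n0); rewrite g0 mxE ltxx.
have a2 : 0 < 2 + alpha by lra.
have a3 : 0 < 4 + 3 * alpha by lra.
have key : (2 + alpha) / Num.sqrt (4 + 3 * alpha) < norm2 gamma <->
   (2 + alpha) ^+ 2 < G * (4 + 3 * alpha).
  rewrite /norm2 -/G ltr_pdivrMr ?sqrtr_gt0 // -sqrtrM ?ltW //.
  rewrite -[X in X < _](@ger0_norm _ (2 + alpha)) ?ltW // -sqrtr_sqr ltr_sqrt //.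
  exact: mulr_gt0.
rewrite key.
rewrite -subr_gt0.
set D := _ - _.
have -> : D = alpha / (8 * (2 + alpha) ^+ 2) * (G * (4 + 3 * alpha) - (2 + alpha) ^+ 2).
  by rewrite /D; field; rewrite gt_eqF.
rewrite pmulr_rgt0 ?subr_gt0 //.
apply: divr_gt0 => //; apply: mulr_gt0 => //; exact: exprn_gt0.
Qed.
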